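(* Let $(a_j)_{j\in\mathbb{N}_0}$ be a complex sequence with $\sum_j|a_j|<\infty$, let $(b_j)_{j\in\mathbb{N}_0}$ be a strictly increasing sequence of positive reals with $b_j\to\infty$, set $b_{-1}=0$ and $\Delta b_j=\min(b_j-b_{j-1},b_{j+1}-b_j)$, and let $f(t)=\sum_{j=0}^\infty a_je^{i b_jt}$. If for some $\alpha\in\,]0,1[$ the function $f$ is Hölder continuous of order $\alpha$ at some point $t_0\in\mathbb{R}$, then $\sup_j|a_j|(\Delta b_j)^\alpha<\infty$.
   Context: A function $g\colon\mathbb{R}\to\mathbb{C}$ is Hölder continuous of order $\alpha$ at $t_0$ if there exist constants $L>0$, $\eta>0$ such that $|g(t)-g(t_0)|\le L|t-t_0|^\alpha$ for all $t\in\,]t_0-\eta,t_0+\eta[$. *)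

(* Defs.v *)
From Stdlib Require Import Reals Lra.
Open Scope R_scope.

Definition Cx := (R * R)%type.
Definition Cadd (z w : Cx) : Cx := (fst z + fst w, snd z + snd w).
Definition Csub (z w : Cx) : Cx := (fst z - fst w, snd z - snd w).
Definition Cmul (z w : Cx) : Cx :=
  (fst z * fst w - snd z * snd w, fst z * snd w + snd z * fst w).
Definition Cnorm (z : Cx) : R := sqrt (fst z ^ 2 + snd z ^ 2).
Definition Cexpi (theta : R) : Cx := (cos theta, sin theta).

Definition Ccv (u : nat -> Cx) (l : Cx) : Prop :=
  Un_cv (fun n => fst (u n)) (fst l) /\ Un_cv (fun n => snd (u n)) (snd l).

Fixpoint Csum (u : nat -> Cx) (n : nat) : Cx :=
  match n with
  | O => u O
  | S m => Cadd (Csum u m) (u (S m))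
  end.

Definition rpow (x a : R) : R := if Req_EM_T x 0 then 0 else Rpower x a.

Definition holder_at (g : R -> Cx) (alpha t0 : R) : Prop :=
  exists L eta, 0 < L /\ 0 < eta /\
    forall t, t0 - eta < t < t0 + eta ->
      Cnorm (Csub (g t) (g t0)) <= L * rpow (Rabs (t - t0)) alpha.

(* b_{-1} = 0 *)
Definition bext (b : nat -> R) (j : nat) : R :=
  match j with O => 0 | S k => b k end.
Definition Delta_b (b : nat -> R) (j : nat) : R :=
  Rmin (b j - bext b j) (b (S j) - b j).

(* Main.v *)
Require Import Defs.
From Stdlib Require Import Reals Lra Lia Psatz.
From Coquelicot Require Import Coquelicot.
Open Scope R_scope.
Ltac rq := match goal with |- ?a = ?b => change (@eq R a b) end.
Ltac nz := repeat split; try (intro; lra); try lra.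

Lemma sin_sq_le y : sin y ^ 2 <= y ^ 2.
Proof.
  assert (H : forall z, 0 <= z -> sin z ^ 2 <= z ^ 2).
  { intros z Hz. destruct (Req_dec z 0) as [->|Hz0]. rewrite sin_0; lra.
    assert (Hs := sin_lt_x z ltac:(lra)). assert (Hb := SIN_bound z).
    destruct (Rle_lt_dec 1 z).
    - nra.
    - assert (0 <= sin z). { apply sin_ge_0; try lra. pose proof PI2_3_2; lra. }
      nra. }
  destruct (Rle_lt_dec 0 y). auto.
  replace (sin y ^ 2) with (sin (-y) ^ 2) by (rewrite sin_neg; ring).
  replace (y^2) with ((-y)^2) by ring. apply H; lra.
Qed.

Lemma one_minus_cos x : 0 <= 1 - cos x <= x ^ 2 / 2 /\ 1 - cos x <= 2.
Proof.
  assert (Hc : cos x = 1 - 2 * sin (x/2) * sin (x/2)).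
  { replace x with (2 * (x/2)) at 1 by field. apply cos_2a_sin. }
  pose proof (sin_sq_le (x/2)). pose proof (COS_bound x).
  rewrite Hc. repeat split; try nra. 
Qed.

Definition phi (u : R) := (1 - cos u) / u ^ 2.

Lemma phi_cont u : 0 < u -> continuous phi u.
Proof.
  intro Hu. apply (@ex_derive_continuous R_AbsRing R_NormedModule). unfold phi. auto_derive. 
  nra.
Qed.

Lemma exR_cont (f : R -> R) a b : (forall z, Rmin a b <= z <= Rmax a b -> continuous f z) -> ex_RInt f a b.
Proof. exact (@ex_RInt_continuous R_CompleteNormedModule f a b). Qed.

Lemma contR (f : R -> R) x : ex_derive f x -> continuous f x.
Proof. exact (@ex_derive_continuous R_AbsRing R_NormedModule f x). Qed.

Lemma phi_ex x y : 0 < x -> 0 < y -> ex_RInt phi x y.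
Proof.
  intros. apply exR_cont. intros z Hz. apply phi_cont.
  unfold Rmin, Rmax in Hz. destruct (Rle_dec x y); lra.
Qed.

Lemma exC (f : R -> R) a b : @ex_RInt R_NormedModule f a b -> @ex_RInt (CompleteNormedModule.NormedModule R_AbsRing R_CompleteNormedModule) f a b.
Proof. exact (fun H => H). Qed.

Lemma RInt_constR (a b c : R) : @eq R (RInt (fun _ => c) a b) ((b - a) * c).
Proof. rewrite RInt_const. reflexivity. Qed.

Lemma inv_sq_int x y : 0 < x -> 0 < y -> RInt (fun u => 2 / u ^ 2) x y = 2 / x - 2 / y.
Proof.
  intros Hx Hy. apply is_RInt_unique.
  replace (2/x - 2/y) with (minus ((fun u => -2/u) y) ((fun u => -2/u) x)).
  2: { unfold minus, plus, opp; simpl. field; lra. }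
  apply (@is_RInt_derive R_CompleteNormedModule).
  - intros z Hz. assert (0 < z) by (unfold Rmin, Rmax in Hz; destruct (Rle_dec x y); lra).
    auto_derive. lra. field. lra.
  - intros z Hz. assert (0 < z) by (unfold Rmin, Rmax in Hz; destruct (Rle_dec x y); lra).
    apply contR. auto_derive. nra.
Qed.

Lemma inv_sq_ex x y : 0 < x -> 0 < y -> ex_RInt (fun u => 2 / u ^ 2) x y.
Proof.
  intros. apply exR_cont. intros z Hz. 
  assert (0 < z) by (unfold Rmin, Rmax in Hz; destruct (Rle_dec x y); lra).
  apply contR. auto_derive. nra.
Qed.

Definition Gc x y := RInt phi x y.

Lemma phi_bounds u : 0 < u -> 0 <= phi u <= 1/2 /\ phi u <= 2 / u ^ 2.
Proof.
  intros Hu. destruct (one_minus_cos u) as [[H1 H2] H3]. unfold phi.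
  assert (0 < u^2) by nra.
  repeat split.
  - apply Rdiv_le_0_compat; lra.
  - apply Rmult_le_reg_r with (u^2); auto. unfold Rdiv. rewrite Rmult_assoc, Rinv_l; lra.
  - unfold Rdiv. apply Rmult_le_compat_r. left; apply Rinv_0_lt_compat; auto. lra.
Qed.

Lemma Gc_bounds x y : 0 < x <= y -> 0 <= Gc x y /\ Gc x y <= (y - x)/2 /\ Gc x y <= 2/x - 2/y.
Proof.
  intros [Hx Hxy]. unfold Gc. repeat split.
  - assert (E0 : RInt (fun _ => 0) x y = 0) by (rewrite RInt_constR; rq; ring).
    rewrite <- E0. apply RInt_le; auto. apply ex_RInt_const. apply phi_ex; lra.
    intros z Hz. apply phi_bounds; lra.
  - assert (E0 : RInt (fun _ => 1/2) x y = (y-x)/2) by (rewrite RInt_constR; rq; field).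
    rewrite <- E0.
    apply RInt_le; auto. apply phi_ex; lra. apply ex_RInt_const.
    intros z Hz. apply phi_bounds; lra.
  - rewrite <- inv_sq_int by lra.
    apply RInt_le; auto. apply phi_ex; lra. apply inv_sq_ex; lra.
    intros z Hz. apply phi_bounds; lra.
Qed.

Lemma Gc_chasles x y z : 0 < x -> 0 < y -> 0 < z -> Gc x y + Gc y z = Gc x z.
Proof.
  intros. unfold Gc. rewrite <- (RInt_Chasles phi x y z); try apply phi_ex; auto.
Qed.

Lemma Gc_mono x y x' y' : 0 < x' <= x -> x <= y -> y <= y' -> Gc x y <= Gc x' y'.
Proof.
  intros. rewrite <- (Gc_chasles x' x y') by lra. rewrite <- (Gc_chasles x y y') by lra.
  destruct (Gc_bounds x' x) as [? _]; try lra. destruct (Gc_bounds y y') as [? _]; lra.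
Qed.

Definition Eset v := exists x y, 0 < x <= y /\ v = Gc x y.

Lemma Eset_ub x y v : 0 < x <= y -> Eset v -> v <= Gc x y + x/2 + 2/y.
Proof.
  intros Hxy [x' [y' [Hx' ->]]].
  set (m := Rmin x x'). set (M := Rmax y y').
  assert (Hm : 0 < m <= x /\ m <= x') by (unfold m, Rmin; destruct (Rle_dec x x'); lra).
  assert (HM : y <= M /\ y' <= M) by (unfold M, Rmax; destruct (Rle_dec y y'); lra).
  apply Rle_trans with (Gc m M). apply Gc_mono; lra.
  rewrite <- (Gc_chasles m x M) by lra. rewrite <- (Gc_chasles x y M) by lra.
  destruct (Gc_bounds m x) as [_ [? _]]; try lra. destruct (Gc_bounds y M) as [_ [_ ?]]; try lra.
  assert (0 < 2 / M) by (apply Rdiv_lt_0_compat; lra).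
  lra.
Qed.

Definition cst : R.
Proof.
  destruct (completeness Eset) as [m _].
  - exists (Gc 1 1 + 1/2 + 2/1). intros v Hv. apply Eset_ub; auto; lra.
  - exists (Gc 1 1). exists 1, 1. split; auto; lra.
  - exact m.
Defined.

Lemma cst_spec x y : 0 < x <= y -> Gc x y <= cst <= Gc x y + x/2 + 2/y.
Proof.
  intros Hxy. unfold cst. destruct (completeness Eset) as [m [Hub Hlub]]. split.
  - apply Hub. exists x, y; auto.
  - apply Hlub. intros v Hv. apply Eset_ub; auto.
Qed.

Lemma cst_pos : 0 < cst.
Proof.
  apply Rlt_le_trans with (Gc 1 2). 2: apply cst_spec; lra.
  assert (Hs : 0 < sin (1/2)) by (apply sin_gt_0; pose proof PI2_3_2; lra).
  assert (Hc1 : cos 1 = 1 - 2 * sin (1/2) * sin (1/2)).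
  { replace 1 with (2 * (1/2)) at 1 by field. apply cos_2a_sin. }
  apply Rlt_le_trans with (RInt (fun _ => (1 - cos 1)/4) 1 2).
  { rewrite RInt_constR. nra. }
  unfold Gc. apply RInt_le. lra. apply ex_RInt_const. apply phi_ex; lra.
  intros z Hz. unfold phi.
  assert (cos z <= cos 1) by (apply cos_decr_1; pose proof PI2_3_2; lra).
  assert (1 - cos 1 > 0) by nra.
  unfold Rdiv. apply Rmult_le_compat; try lra.
  all: try (left; apply Rinv_0_lt_compat; lra).
  apply Rinv_le_contravar; nra.
Qed.

Definition Tf (a s : R) := (1 - cos (a * s)) / s ^ 2.
Definition T r B a := RInt (Tf a) r B.

Lemma pos_in r B z : 0 < r -> 0 < B -> Rmin r B <= z <= Rmax r B -> 0 < z.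
Proof. intros. unfold Rmin, Rmax in *. destruct (Rle_dec r B); lra. Qed.

Lemma Tf_ex a r B : 0 < r -> 0 < B -> ex_RInt (Tf a) r B.
Proof.
  intros. apply exR_cont. intros z Hz. assert (0 < z) by (apply (pos_in r B); auto).
  apply contR. unfold Tf. auto_derive; try (let Hc := fresh in intro Hc; assert (0 < a * z) by nra; nra).
Qed.

Lemma T_pos a r B : 0 < a -> 0 < r -> 0 < B -> T r B a = a * Gc (a * r) (a * B).
Proof.
  intros Ha Hr HR. unfold T, Gc.
  assert (Hg : ex_RInt (fun y => scal a (phi (a * y + 0))) r B).
  { apply exR_cont. intros z Hz. assert (0 < z) by (apply (pos_in r B); auto).
    apply contR. unfold phi, scal; simpl; unfold mult; simpl. auto_derive; try (let Hc := fresh in intro Hc; assert (0 < a * z) by nra; nra). }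
  rewrite <- (Rplus_0_r (a*r)), <- (Rplus_0_r (a*B)).
  rewrite <- RInt_comp_lin by (apply phi_ex; nra).
  transitivity (RInt (fun y => scal a (scal a (phi (a * y + 0)))) r B).
  - apply RInt_ext. intros z Hz. assert (0 < z) by (unfold Rmin, Rmax in Hz; destruct (Rle_dec r B); lra).
    unfold Tf, phi, scal; simpl; unfold mult; simpl. rewrite Rplus_0_r. field; split; lra.
  - apply (@RInt_scal R_CompleteNormedModule). exact Hg.
Qed.

Lemma T_neg a r B : T r B (- a) = T r B a.
Proof.
  unfold T. apply RInt_ext. intros. unfold Tf. 
  replace (- a * x) with (- (a * x)) by ring. rewrite cos_neg. reflexivity.
Qed.

Lemma T_zero r B : T r B 0 = 0.
Proof.
  unfold T. transitivity (RInt (fun _ => 0) r B).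
  apply RInt_ext. intros. unfold Tf. rewrite Rmult_0_l, cos_0. rq. unfold Rdiv. ring.
  rewrite RInt_constR. rq. ring.
Qed.

Lemma T_approx_pos a r B : 0 < a -> 0 < r <= B ->
  0 <= a * cst - T r B a <= a ^ 2 * r / 2 + 2 / B.
Proof.
  intros Ha Hr. rewrite T_pos by lra.
  destruct (cst_spec (a*r) (a*B)) as [H1 H2]. split; nra.
  assert (E : a * (a * r / 2 + 2 / (a * B)) = a ^ 2 * r / 2 + 2 / B) by (field; lra).
  split. nra. rewrite <- E. nra.
Qed.

Lemma T_approx a r B : 0 < r <= B ->
  Rabs (T r B a - Rabs a * cst) <= a ^ 2 * r / 2 + 2 / B.
Proof.
  intros Hr. assert (0 < 2 / B) by (apply Rdiv_lt_0_compat; lra).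
  destruct (Rtotal_order a 0) as [Hn|[Hz|Hp]].
  - rewrite <- (T_neg a). rewrite (Rabs_left a) by lra.
    destruct (T_approx_pos (-a) r B) as [H1 H2]; try lra.
    rewrite Rabs_left1 by lra. replace (a^2) with ((-a)^2) by ring. lra.
  - subst. rewrite T_zero, Rabs_R0. replace (0 - 0 * cst) with 0 by ring. rewrite Rabs_R0. nra.
  - rewrite (Rabs_right a) by lra.
    destruct (T_approx_pos a r B) as [H1 H2]; try lra.
    rewrite Rabs_left1 by lra. lra.
Qed.

Lemma abs_le_inv x e : Rabs x <= e -> - e <= x <= e.
Proof. unfold Rabs; destruct (Rcase_abs x); lra. Qed.

Definition W r B d xi := RInt (fun s => cos (xi * s) * Tf d s) r B.

Lemma W_T r B d xi : 0 < r -> 0 < B ->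
  W r B d xi = (T r B (xi + d) + T r B (xi - d)) / 2 - T r B xi.
Proof.
  intros Hr HB. unfold W, T.
  transitivity (RInt (fun s => minus (scal (/2) (plus (Tf (xi+d) s) (Tf (xi-d) s))) (Tf xi s)) r B).
  - apply RInt_ext. intros z Hz. assert (0 < z) by (unfold Rmin, Rmax in Hz; destruct (Rle_dec r B); lra).
    unfold minus, plus, scal, opp; simpl; unfold mult; simpl. unfold Tf.
    replace ((xi + d) * z) with (xi * z + d * z) by ring.
    replace ((xi - d) * z) with (xi * z - d * z) by ring.
    rewrite cos_plus, cos_minus. field. lra.
  - rewrite (@RInt_minus R_CompleteNormedModule).
    rewrite (@RInt_scal R_CompleteNormedModule).
    rewrite (@RInt_plus R_CompleteNormedModule).
    set (I1 := RInt (Tf (xi + d)) r B). set (I2 := RInt (Tf (xi - d)) r B). set (I3 := RInt (Tf xi) r B).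
    unfold minus, plus, scal, opp; simpl; unfold mult; simpl. clearbody I1 I2 I3. rq; field.
    + apply exC, Tf_ex; assumption.
    + apply exC, Tf_ex; assumption.
    + apply exC. apply (@ex_RInt_plus R_NormedModule); apply Tf_ex; assumption.
    + apply exC. apply (@ex_RInt_scal R_NormedModule). apply (@ex_RInt_plus R_NormedModule); apply Tf_ex; assumption.
    + apply exC, Tf_ex; assumption.
Qed.

Definition tri d xi := Rabs (xi + d) + Rabs (xi - d) - 2 * Rabs xi.

Lemma W_approx r B d xi : 0 < r <= B -> 0 < d ->
  Rabs (W r B d xi - cst / 2 * tri d xi) <= (Rabs xi + d) ^ 2 * r + 4 / B.
Proof.
  intros Hr Hd. rewrite W_T by lra. unfold tri.
  pose proof (abs_le_inv _ _ (T_approx (xi + d) r B Hr)).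
  pose proof (abs_le_inv _ _ (T_approx (xi - d) r B Hr)).
  pose proof (abs_le_inv _ _ (T_approx xi r B Hr)).
  assert (E1 : (xi + d) ^ 2 <= (Rabs xi + d) ^ 2).
  { apply pow_maj_Rabs. pose proof (Rabs_triang xi d). rewrite (Rabs_right d) in H2 by lra. lra. }
  assert (E2 : (xi - d) ^ 2 <= (Rabs xi + d) ^ 2).
  { apply pow_maj_Rabs. pose proof (Rabs_triang xi (-d)). rewrite (Rabs_left (-d)) in H2 by lra. unfold Rminus. lra. }
  assert (E3 : xi ^ 2 <= (Rabs xi + d) ^ 2).
  { apply pow_maj_Rabs. lra. }
  assert (0 < 2 / B) by (apply Rdiv_lt_0_compat; lra).
  assert (4 / B = 2 * (2 / B)) by (field; lra).
  apply Rmult_le_compat_r with (r := r) in E1; [|lra].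
  apply Rmult_le_compat_r with (r := r) in E2; [|lra].
  apply Rmult_le_compat_r with (r := r) in E3; [|lra].
  apply Rabs_le. split; lra.
Qed.

Lemma tri_far d xi : 0 < d -> d <= Rabs xi -> tri d xi = 0.
Proof.
  intros. unfold tri. unfold Rabs in *. 
  destruct (Rcase_abs xi); destruct (Rcase_abs (xi + d)); destruct (Rcase_abs (xi - d)); lra.
Qed.

Lemma tri_0 d : 0 < d -> tri d 0 = 2 * d.
Proof.
  intros. unfold tri. rewrite Rplus_0_l, Rminus_0_l, Rabs_Ropp, Rabs_R0, Rabs_right; lra.
Qed.

Lemma Cnorm_Cmod z : Cnorm z = Cmod z.
Proof. reflexivity. Qed.

Lemma Cnorm_triang z w : Cnorm (Cadd z w) <= Cnorm z + Cnorm w.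
Proof. exact (Cmod_triangle z w). Qed.

Lemma Cnorm_mul z w : Cnorm (Cmul z w) = Cnorm z * Cnorm w.
Proof. exact (Cmod_mult z w). Qed.

Lemma Cnorm_expi th : Cnorm (Cexpi th) = 1.
Proof.
  unfold Cnorm, Cexpi; simpl. replace (cos th * (cos th * 1) + sin th * (sin th * 1)) with 1. apply sqrt_1.
  pose proof (sin2_cos2 th). unfold Rsqr in H. nra.
Qed.

Lemma Cnorm_ge0 z : 0 <= Cnorm z.
Proof. apply sqrt_pos. Qed.

Lemma Cnorm_fst z : Rabs (fst z) <= Cnorm z.
Proof.
  unfold Cnorm. rewrite <- sqrt_Rsqr_abs. apply sqrt_le_1_alt.
  unfold Rsqr. nra.
Qed.

Lemma Cnorm_snd z : Rabs (snd z) <= Cnorm z.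
Proof.
  unfold Cnorm. rewrite <- sqrt_Rsqr_abs. apply sqrt_le_1_alt.
  unfold Rsqr. nra.
Qed.

Lemma Cnorm_le_sum z : Cnorm z <= Rabs (fst z) + Rabs (snd z).
Proof.
  unfold Cnorm. rewrite <- (sqrt_Rsqr (Rabs (fst z) + Rabs (snd z))).
  2: pose proof (Rabs_pos (fst z)); pose proof (Rabs_pos (snd z)); lra.
  apply sqrt_le_1_alt. unfold Rsqr.
  pose proof (Rabs_pos (fst z)); pose proof (Rabs_pos (snd z)).
  rewrite <- (Rabs_sqr (fst z)) at 1 2 || idtac.
  assert (fst z ^ 2 = Rabs (fst z) * Rabs (fst z)) by (rewrite <- Rabs_mult; rewrite Rabs_right; nra).
  assert (snd z ^ 2 = Rabs (snd z) * Rabs (snd z)) by (rewrite <- Rabs_mult; rewrite Rabs_right; nra).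
  nra.
Qed.


Definition Q (p q be : R) (z : Cx) (t : R) :=
  (p * fst z + q * snd z) * cos (be * t) + (p * snd z - q * fst z) * sin (be * t).

Lemma Q_add (p q be : R) z w t : Q p q be (Cadd z w) t = Q p q be z t + Q p q be w t.
Proof. unfold Q, Cadd; simpl. ring. Qed.

Lemma Q_sub (p q be : R) z w t : Q p q be (Csub z w) t = Q p q be z t - Q p q be w t.
Proof. unfold Q, Csub; simpl. ring. Qed.

Lemma Q_bound (p q be : R) z t : Rabs (Q p q be z t) <= Cnorm (p, q) * Cnorm z.
Proof.
  unfold Q, Cnorm; cbn [fst snd]. rewrite <- sqrt_mult by nra.
  rewrite <- sqrt_Rsqr_abs. apply sqrt_le_1_alt. unfold Rsqr.
  set (c := cos (be * t)). set (s := sin (be * t)).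
  assert (Hcs : c * c + s * s = 1) by (pose proof (sin2_cos2 (be*t)); unfold Rsqr in *; unfold c, s; lra).
  set (A := p * fst z + q * snd z). set (B := p * snd z - q * fst z).
  assert (E : (p ^ 2 + q ^ 2) * (fst z ^ 2 + snd z ^ 2) = A * A + B * B) by (unfold A, B; ring).
  rewrite E. assert (0 <= (A * s - B * c) ^ 2) by apply pow2_ge_0.
  assert (E2 : (A * c + B * s) * (A * c + B * s) + (A * s - B * c) ^ 2 = (A * A + B * B) * (c * c + s * s)) by ring.
  rewrite Hcs, Rmult_1_r in E2. lra.
Qed.

Lemma Q_sym (p q be : R) z t0 s : (Q p q be z (t0 + s) + Q p q be z (t0 - s)) / 2 = Q p q be z t0 * cos (be * s).
Proof.
  unfold Q. rewrite !Rmult_plus_distr_l, !Rmult_minus_distr_l, cos_plus, sin_plus, cos_minus, sin_minus.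
  field.
Qed.

Definition eterm (a : Cx) (bk t : R) := Cmul a (Cexpi (bk * t)).

Lemma Q_term_sym (p q be : R) a bk t0 s :
  (Q p q be (eterm a bk (t0 + s)) (t0 + s) + Q p q be (eterm a bk (t0 - s)) (t0 - s)) / 2
  = Q p q be (eterm a bk t0) t0 * cos ((bk - be) * s).
Proof.
  unfold Q, eterm, Cmul, Cexpi; simpl.
  rewrite !Rmult_plus_distr_l, !Rmult_minus_distr_l, !Rmult_minus_distr_r,
    !cos_plus, !sin_plus, !cos_minus, !sin_minus.
  field.
Qed.

Lemma Q_self (p q be : R) t0 : Q p q be (eterm (p, q) be t0) t0 = p ^ 2 + q ^ 2.
Proof.
  unfold Q, eterm, Cmul, Cexpi; simpl.
  pose proof (sin2_cos2 (be * t0)). unfold Rsqr in H. nra.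
Qed.


Lemma b_mono (b : nat -> R) (Hb : forall j, b j < b (S j)) k m : (k <= m)%nat -> b k <= b m.
Proof.
  induction 1. lra. specialize (Hb m). lra.
Qed.

Lemma Delta_pos b (Hpos : forall j, 0 < b j) (Hb : forall j, b j < b (S j)) j :
  0 < Delta_b b j /\ Delta_b b j <= b j.
Proof.
  unfold Delta_b. split.
  - apply Rmin_glb_lt. destruct j; simpl. specialize (Hpos 0%nat); lra. specialize (Hb j); lra.
    specialize (Hb j); lra.
  - eapply Rle_trans. apply Rmin_l. destruct j; simpl. lra. specialize (Hpos j); lra.
Qed.

Lemma Delta_far b (Hpos : forall j, 0 < b j) (Hb : forall j, b j < b (S j)) j k :
  k <> j -> Delta_b b j <= Rabs (b k - b j).
Proof.
  intros Hkj. unfold Delta_b. destruct (Nat.lt_gt_cases k j) as [[Hlt|Hgt] _]; [lia| |].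
  - destruct j as [|m]; [lia|]. simpl.
    assert (b k <= b m) by (apply b_mono; auto; lia).
    specialize (Hb m). rewrite Rabs_left by lra.
    eapply Rle_trans. apply Rmin_l. lra.
  - assert (b (S j) <= b k) by (apply b_mono; auto; lia).
    specialize (Hb j). rewrite Rabs_right by lra.
    eapply Rle_trans. apply Rmin_r. lra.
Qed.

Lemma Csum_norm u N : Cnorm (Csum u N) <= sum_f_R0 (fun k => Cnorm (u k)) N.
Proof.
  induction N; simpl. lra.
  eapply Rle_trans. apply Cnorm_triang. lra.
Qed.

Lemma Csum_diff u N M : (N <= M)%nat ->
  Cnorm (Csub (Csum u M) (Csum u N)) <= sum_f_R0 (fun k => Cnorm (u k)) M - sum_f_R0 (fun k => Cnorm (u k)) N.
Proof.
  induction 1.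
  - unfold Csub, Cnorm. cbn [fst snd]. replace (fst (Csum u N) - fst (Csum u N)) with 0 by ring.
    replace (snd (Csum u N) - snd (Csum u N)) with 0 by ring.
    replace (0 ^ 2 + 0 ^ 2) with 0 by ring. rewrite sqrt_0. lra.
  - simpl. replace (Csub (Cadd (Csum u m) (u (S m))) (Csum u N))
      with (Cadd (Csub (Csum u m) (Csum u N)) (u (S m))).
    2: { unfold Csub, Cadd; simpl. f_equal; ring. }
    eapply Rle_trans. apply Cnorm_triang. lra.
Qed.

Lemma lim_le (u : nat -> R) l c tau N : Un_cv u l -> (forall M, (N <= M)%nat -> Rabs (u M - c) <= tau) ->
  Rabs (l - c) <= tau.
Proof.
  intros Hu Hb. destruct (Rle_lt_dec (Rabs (l - c)) tau) as [|Hlt]; auto.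
  destruct (Hu (Rabs (l - c) - tau)) as [N0 HN0]. lra.
  specialize (HN0 (max N N0) ltac:(lia)). specialize (Hb (max N N0) ltac:(lia)).
  unfold R_dist in HN0.
  pose proof (Rabs_triang (l - u (max N N0)) (u (max N N0) - c)).
  replace (l - u (max N N0) + (u (max N N0) - c)) with (l - c) in H by ring.
  rewrite <- Rabs_Ropp in HN0. replace (- (u (max N N0) - l)) with (l - u (max N N0)) in HN0 by ring.
  lra.
Qed.

Lemma sum_single (u : nat -> R) j N : (j <= N)%nat -> (forall k, (k <= N)%nat -> k <> j -> u k = 0) ->
  sum_f_R0 u N = u j.
Proof.
  intros HjN Hz. induction N.
  - assert (j = 0%nat) by lia. subst. reflexivity.
  - simpl. destruct (Nat.eq_dec j (S N)).
    + subst. assert (sum_f_R0 u N = 0).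
      { clear IHN HjN. assert (forall k, (k <= N)%nat -> u k = 0) by (intros; apply Hz; lia).
        clear Hz. induction N; simpl. apply H; lia. rewrite IHN, H; auto. ring. }
      rewrite H. ring.
    + rewrite IHN by (auto; lia). rewrite (Hz (S N)) by lia. ring.
Qed.

Lemma sum_abs_bound (c v : nat -> R) E N : (forall k, (k <= N)%nat -> Rabs (v k) <= E) ->
  Rabs (sum_f_R0 (fun k => c k * v k) N) <= sum_f_R0 (fun k => Rabs (c k)) N * E.
Proof.
  intros H. eapply Rle_trans. apply sum_f_R0_triangle.
  rewrite Rmult_comm, scal_sum. apply sum_Rle. intros k Hk. rewrite Rabs_mult.
  apply Rmult_le_compat_l. apply Rabs_pos. auto.
Qed.

Lemma sym_sum (p q be t0 s : R) (a : nat -> Cx) (b : nat -> R) N :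
  (Q p q be (Csum (fun k => Cmul (a k) (Cexpi (b k * (t0 + s)))) N) (t0 + s)
   + Q p q be (Csum (fun k => Cmul (a k) (Cexpi (b k * (t0 - s)))) N) (t0 - s)) / 2
  = sum_f_R0 (fun k => Q p q be (eterm (a k) (b k) t0) t0 * cos ((b k - be) * s)) N.
Proof.
  induction N; simpl.
  - apply Q_term_sym.
  - rewrite !Q_add. rewrite <- IHN. rewrite <- (Q_term_sym p q be (a (S N)) (b (S N)) t0 s).
    unfold eterm. field.
Qed.

Lemma RInt_plusR (f g : R -> R) a b : ex_RInt f a b -> ex_RInt g a b ->
  RInt (fun x => f x + g x) a b = RInt f a b + RInt g a b.
Proof. intros. exact (@RInt_plus R_CompleteNormedModule f g a b H H0). Qed.

Lemma RInt_minusR (f g : R -> R) a b : ex_RInt f a b -> ex_RInt g a b ->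
  RInt (fun x => f x - g x) a b = RInt f a b - RInt g a b.
Proof. intros. exact (@RInt_minus R_CompleteNormedModule f g a b H H0). Qed.

Lemma RInt_scalR (f : R -> R) a b k : ex_RInt f a b ->
  RInt (fun x => k * f x) a b = k * RInt f a b.
Proof. intros. exact (@RInt_scal R_CompleteNormedModule f a b k H). Qed.

Lemma ex_plusR (f g : R -> R) a b : ex_RInt f a b -> ex_RInt g a b -> ex_RInt (fun x => f x + g x) a b.
Proof. intros. exact (@ex_RInt_plus R_NormedModule f g a b H H0). Qed.

Lemma ex_minusR (f g : R -> R) a b : ex_RInt f a b -> ex_RInt g a b -> ex_RInt (fun x => f x - g x) a b.
Proof. intros. exact (@ex_RInt_minus R_NormedModule f g a b H H0). Qed.

Lemma ex_scalR (f : R -> R) a b k : ex_RInt f a b -> ex_RInt (fun x => k * f x) a b.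
Proof. intros. exact (@ex_RInt_scal R_NormedModule f a b k H). Qed.

Lemma ex_extR (f g : R -> R) a b : (forall x, f x = g x) -> ex_RInt f a b -> ex_RInt g a b.
Proof.
  intros Hfg H. exact (@ex_RInt_ext R_NormedModule f g a b (fun x _ => Hfg x) H).
Qed.

Lemma cosTf_ex x d r B : 0 < r -> 0 < B -> ex_RInt (fun s => cos (x * s) * Tf d s) r B.
Proof.
  intros. apply exR_cont. intros z Hz. assert (0 < z) by (apply (pos_in r B); auto).
  apply contR. unfold Tf. auto_derive. intro; nra.
Qed.

Lemma sum_int (c xi : nat -> R) d r B N : 0 < r -> 0 < B ->
  ex_RInt (fun s => sum_f_R0 (fun k => c k * cos (xi k * s)) N * Tf d s) r B /\
  RInt (fun s => sum_f_R0 (fun k => c k * cos (xi k * s)) N * Tf d s) r B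
  = sum_f_R0 (fun k => c k * W r B d (xi k)) N.
Proof.
  intros Hr HB. induction N; simpl.
  - assert (E : forall s, c 0%nat * cos (xi 0%nat * s) * Tf d s = c 0%nat * (cos (xi 0%nat * s) * Tf d s)) by (intros; ring).
    split.
    + eapply ex_extR. intros; symmetry; apply E. apply ex_scalR, cosTf_ex; auto.
    + rewrite (RInt_ext _ (fun s => c 0%nat * (cos (xi 0%nat * s) * Tf d s))) by (intros; apply E).
      rewrite RInt_scalR by (apply cosTf_ex; auto). reflexivity.
  - destruct IHN as [Hex Heq].
    assert (E : forall s, (sum_f_R0 (fun k => c k * cos (xi k * s)) N + c (S N) * cos (xi (S N) * s)) * Tf d s
      = sum_f_R0 (fun k => c k * cos (xi k * s)) N * Tf d s + c (S N) * (cos (xi (S N) * s) * Tf d s)) by (intros; ring).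
    split.
    + eapply ex_extR. intros; symmetry; apply E. apply ex_plusR; auto. apply ex_scalR, cosTf_ex; auto.
    + rewrite (RInt_ext _ (fun s => sum_f_R0 (fun k => c k * cos (xi k * s)) N * Tf d s + c (S N) * (cos (xi (S N) * s) * Tf d s))) by (intros; apply E).
      rewrite RInt_plusR; auto. rewrite Heq, RInt_scalR by (apply cosTf_ex; auto). reflexivity.
      apply ex_scalR, cosTf_ex; auto.
Qed.

Definition hfun (c xi : nat -> R) D be N s := sum_f_R0 (fun k => c k * cos (xi k * s)) N - D * cos (be * s).

Lemma h_int (c xi : nat -> R) D be d r B N : 0 < r -> 0 < B ->
  ex_RInt (fun s => hfun c xi D be N s * Tf d s) r B /\
  RInt (fun s => hfun c xi D be N s * Tf d s) r B
  = sum_f_R0 (fun k => c k * W r B d (xi k)) N - D * W r B d be.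
Proof.
  intros Hr HB. destruct (sum_int c xi d r B N Hr HB) as [Hex Heq].
  assert (E : forall s, hfun c xi D be N s * Tf d s =
     sum_f_R0 (fun k => c k * cos (xi k * s)) N * Tf d s - D * (cos (be * s) * Tf d s)) by (intros; unfold hfun; ring).
  split.
  - eapply ex_extR. intros; symmetry; apply E. apply ex_minusR; auto. apply ex_scalR, cosTf_ex; auto.
  - rewrite (RInt_ext _ _ r B (fun x _ => E x)).
    rewrite RInt_minusR; auto. rewrite Heq, RInt_scalR by (apply cosTf_ex; auto). reflexivity.
    apply ex_scalR, cosTf_ex; auto.
Qed.

Lemma Rpower_derive e x : 0 < x -> is_derive (fun s => Rpower s e) x (e * Rpower x (e - 1)).
Proof. intros. apply is_derive_Reals. apply derivable_pt_lim_power; auto. Qed.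

Lemma pos_in' x y z : 0 < x -> 0 < y -> Rmin x y <= z <= Rmax x y -> 0 < z.
Proof. intros. unfold Rmin, Rmax in *. destruct (Rle_dec x y); lra. Qed.

Lemma pow_int e x y : 0 < x -> 0 < y -> e + 1 <> 0 ->
  ex_RInt (fun s => Rpower s e) x y /\
  RInt (fun s => Rpower s e) x y = (Rpower y (e + 1) - Rpower x (e + 1)) / (e + 1).
Proof.
  intros Hx Hy He.
  assert (H : is_RInt (fun s => Rpower s e) x y
     (minus ((fun s => / (e + 1) * Rpower s (e + 1)) y) ((fun s => / (e + 1) * Rpower s (e + 1)) x))).
  { apply (@is_RInt_derive R_CompleteNormedModule (fun s => / (e + 1) * Rpower s (e + 1))).
    - intros z Hz. assert (0 < z) by (apply (pos_in' x y); auto).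
      assert (Ez : Rpower z e = / (e + 1) * ((e + 1) * Rpower z (e + 1 - 1))).
      { replace (e + 1 - 1) with e by ring. field; auto. }
      rewrite Ez. apply is_derive_scal. apply Rpower_derive; auto.
    - intros z Hz. assert (0 < z) by (apply (pos_in' x y); auto).
      apply contR. eexists. apply Rpower_derive; auto. }
  split. eexists; eauto.
  rewrite (is_RInt_unique _ _ _ _ H). unfold minus, plus, opp; simpl. field. auto.
Qed.

Lemma invsq_K_int K x y : 0 < x -> 0 < y ->
  ex_RInt (fun s => K * (2 / s ^ 2)) x y /\ RInt (fun s => K * (2 / s ^ 2)) x y = K * (2 / x - 2 / y).
Proof.
  intros. split. apply ex_scalR, inv_sq_ex; auto.
  rewrite RInt_scalR by (apply inv_sq_ex; auto). rewrite inv_sq_int; auto.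
Qed.

Definition FN (a : nat -> Cx) (b : nat -> R) N t := Csum (fun k => Cmul (a k) (Cexpi (b k * t))) N.
Definition Hs p q be t0 (F : R -> Cx) s :=
  (Q p q be (Csub (F (t0 + s)) (F t0)) (t0 + s) + Q p q be (Csub (F (t0 - s)) (F t0)) (t0 - s)) / 2.
Definition ck p q be t0 (a : nat -> Cx) (b : nat -> R) k := Q p q be (eterm (a k) (b k) t0) t0.
Definition xi (b : nat -> R) be k := b k - be.

Lemma F1 p q be t0 a b N s :
  Hs p q be t0 (FN a b N) s = hfun (ck p q be t0 a b) (xi b be) (Q p q be (FN a b N t0) t0) be N s.
Proof.
  unfold Hs, hfun, ck, xi. rewrite !Q_sub.
  rewrite <- (Q_sym p q be (FN a b N t0) t0 s).
  rewrite <- (sym_sum p q be t0 s a b N). unfold FN. field.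
Qed.

Lemma PS_terms (a : nat -> Cx) (b : nat -> R) t M :
  sum_f_R0 (fun k => Cnorm (Cmul (a k) (Cexpi (b k * t)))) M = sum_f_R0 (fun k => Cnorm (a k)) M.
Proof.
  apply sum_eq. intros. rewrite Cnorm_mul, Cnorm_expi. ring.
Qed.

Lemma F2 (a : nat -> Cx) (b : nat -> R) (f : R -> Cx) S
  (HS : forall M, sum_f_R0 (fun k => Cnorm (a k)) M <= S)
  (Hf : forall t, Ccv (Csum (fun j => Cmul (a j) (Cexpi (b j * t)))) (f t)) N t :
  Cnorm (Csub (f t) (FN a b N t)) <= 2 * (S - sum_f_R0 (fun k => Cnorm (a k)) N).
Proof.
  set (tau := S - sum_f_R0 (fun k => Cnorm (a k)) N).
  assert (HM : forall M, (N <= M)%nat -> Cnorm (Csub (FN a b M t) (FN a b N t)) <= tau).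
  { intros M HM. unfold FN. eapply Rle_trans. apply Csum_diff; auto.
    cbv beta. rewrite !PS_terms. unfold tau. specialize (HS M). lra. }
  destruct (Hf t) as [H1 H2].
  assert (A1 : Rabs (fst (f t) - fst (FN a b N t)) <= tau).
  { apply (lim_le _ _ _ _ N H1). intros M HMN. eapply Rle_trans. 2: apply (HM M HMN).
    apply (Cnorm_fst (Csub (FN a b M t) (FN a b N t))). }
  assert (A2 : Rabs (snd (f t) - snd (FN a b N t)) <= tau).
  { apply (lim_le _ _ _ _ N H2). intros M HMN. eapply Rle_trans. 2: apply (HM M HMN).
    apply (Cnorm_snd (Csub (FN a b M t) (FN a b N t))). }
  eapply Rle_trans. apply Cnorm_le_sum. unfold Csub; simpl. lra.
Qed.

Lemma F4 p q be t0 (F G : R -> Cx) tau s :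
  (forall t, Cnorm (Csub (F t) (G t)) <= tau) ->
  Rabs (Hs p q be t0 F s - Hs p q be t0 G s) <= 2 * (Cnorm (p, q) * tau).
Proof.
  intros Ht. unfold Hs. rewrite !Q_sub.
  assert (E : forall x t, Q p q be (F x) t - Q p q be (G x) t = Q p q be (Csub (F x) (G x)) t) by (intros; rewrite Q_sub; ring).
  assert (B : forall x t, Rabs (Q p q be (F x) t - Q p q be (G x) t) <= Cnorm (p, q) * tau).
  { intros. rewrite E. eapply Rle_trans. apply Q_bound. apply Rmult_le_compat_l. apply Cnorm_ge0. auto. }
  pose proof (B (t0 + s) (t0 + s)). pose proof (B t0 (t0 + s)).
  pose proof (B (t0 - s) (t0 - s)). pose proof (B t0 (t0 - s)).
  repeat match goal with H : Rabs _ <= _ |- _ => apply abs_le_inv in H end.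
  apply Rabs_le. split; lra.
Qed.

Lemma F3 p q be t0 (f : R -> Cx) L eta alpha s :
  (forall t, t0 - eta < t < t0 + eta -> Cnorm (Csub (f t) (f t0)) <= L * rpow (Rabs (t - t0)) alpha) ->
  0 < s < eta ->
  Rabs (Hs p q be t0 f s) <= Cnorm (p, q) * (L * Rpower s alpha).
Proof.
  intros Hh Hs0. unfold Hs.
  assert (R1 : rpow (Rabs (t0 + s - t0)) alpha = Rpower s alpha).
  { replace (t0 + s - t0) with s by ring. rewrite Rabs_right by lra. unfold rpow.
    destruct (Req_EM_T s 0); [lra|auto]. }
  assert (R2 : rpow (Rabs (t0 - s - t0)) alpha = Rpower s alpha).
  { replace (t0 - s - t0) with (- s) by ring. rewrite Rabs_Ropp, Rabs_right by lra. unfold rpow.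
    destruct (Req_EM_T s 0); [lra|auto]. }
  pose proof (Hh (t0 + s) ltac:(lra)) as H1. pose proof (Hh (t0 - s) ltac:(lra)) as H2.
  rewrite R1 in H1. rewrite R2 in H2.
  pose proof (Q_bound p q be (Csub (f (t0 + s)) (f t0)) (t0 + s)).
  pose proof (Q_bound p q be (Csub (f (t0 - s)) (f t0)) (t0 - s)).
  pose proof (Cnorm_ge0 (p, q)).
  assert (Cnorm (p, q) * Cnorm (Csub (f (t0 + s)) (f t0)) <= Cnorm (p, q) * (L * Rpower s alpha)) by (apply Rmult_le_compat_l; auto).
  assert (Cnorm (p, q) * Cnorm (Csub (f (t0 - s)) (f t0)) <= Cnorm (p, q) * (L * Rpower s alpha)) by (apply Rmult_le_compat_l; auto).
  repeat match goal with H : Rabs _ <= _ |- _ => apply abs_le_inv in H end.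
  apply Rabs_le. split; lra.
Qed.

Lemma ck_bound p q be t0 a b k : Rabs (ck p q be t0 a b k) <= Cnorm (p, q) * Cnorm (a k).
Proof.
  unfold ck. eapply Rle_trans. apply Q_bound. unfold eterm. rewrite Cnorm_mul, Cnorm_expi, Rmult_1_r. lra.
Qed.

Lemma DN_bound p q be t0 a b N :
  Rabs (Q p q be (FN a b N t0) t0) <= Cnorm (p, q) * sum_f_R0 (fun k => Cnorm (a k)) N.
Proof.
  eapply Rle_trans. apply Q_bound. apply Rmult_le_compat_l. apply Cnorm_ge0.
  unfold FN. eapply Rle_trans. apply Csum_norm. cbv beta. rewrite PS_terms. lra.
Qed.

Lemma sumck_bound p q be t0 a b N :
  sum_f_R0 (fun k => Rabs (ck p q be t0 a b k)) N <= Cnorm (p, q) * sum_f_R0 (fun k => Cnorm (a k)) N.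
Proof.
  rewrite scal_sum. apply sum_Rle. intros. rewrite Rmult_comm. apply ck_bound.
Qed.

Lemma abs_cos_le x : Rabs (cos x) <= 1.
Proof. apply Rabs_le. apply COS_bound. Qed.

Lemma h_far p q be t0 a b N s :
  Rabs (hfun (ck p q be t0 a b) (xi b be) (Q p q be (FN a b N t0) t0) be N s)
  <= 2 * (Cnorm (p, q) * sum_f_R0 (fun k => Cnorm (a k)) N).
Proof.
  unfold hfun.
  pose proof (sum_abs_bound (ck p q be t0 a b) (fun k => cos (xi b be k * s)) 1 N
     (fun k _ => abs_cos_le _)) as H1.
  pose proof (sumck_bound p q be t0 a b N).
  pose proof (DN_bound p q be t0 a b N).
  pose proof (abs_cos_le (be * s)).
  pose proof (Rabs_pos (Q p q be (FN a b N t0) t0)).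
  assert (Rabs (Q p q be (FN a b N t0) t0 * cos (be * s)) <= Rabs (Q p q be (FN a b N t0) t0)).
  { rewrite Rabs_mult. pose proof (Rabs_pos (cos (be * s))). nra. }
  unfold Rminus. eapply Rle_trans. apply Rabs_triang. rewrite Rabs_Ropp. lra.
Qed.

Lemma n_sq p q : Cnorm (p, q) ^ 2 = p ^ 2 + q ^ 2.
Proof. unfold Cnorm; cbn [fst snd]. rewrite pow2_sqrt; auto. pose proof (pow2_ge_0 p); pose proof (pow2_ge_0 q); lra. Qed.

Lemma F6 (a : nat -> Cx) (b : nat -> R) t0 j N d r B Lam P p q :
  a j = (p, q) -> (j <= N)%nat -> 0 < d -> d <= b j ->
  (forall k, k <> j -> d <= Rabs (b k - b j)) ->
  (forall k, (k <= N)%nat -> (Rabs (b k - b j) + d) ^ 2 <= Lam) ->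
  (Rabs (b j) + d) ^ 2 <= Lam ->
  0 < r <= B ->
  sum_f_R0 (fun k => Cnorm (a k)) N <= P ->
  Cnorm (p, q) ^ 2 * cst * d - 2 * (Cnorm (p, q) * P) * (Lam * r + 4 / B) <=
  sum_f_R0 (fun k => ck p q (b j) t0 a b k * W r B d (xi b (b j) k)) N
  - Q p q (b j) (FN a b N t0) t0 * W r B d (b j).
Proof.
  intros Hpq HjN Hd Hdb Hfar HLam HLamj Hr HP.
  set (E := Lam * r + 4 / B).
  assert (HE : 0 <= E).
  { unfold E. assert (0 <= Lam) by (eapply Rle_trans; [|apply HLamj]; apply pow2_ge_0).
    assert (0 < 4 / B) by (apply Rdiv_lt_0_compat; lra). nra. }
  set (c := ck p q (b j) t0 a b).
  set (V := fun k => W r B d (xi b (b j) k) - cst / 2 * tri d (xi b (b j) k)).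
  assert (HV : forall k, (k <= N)%nat -> Rabs (V k) <= E).
  { intros k Hk. unfold V. eapply Rle_trans. apply W_approx; lra.
    unfold E. unfold xi. apply Rplus_le_compat_r. apply Rmult_le_compat_r. lra. auto. }
  assert (Hsplit : sum_f_R0 (fun k => c k * W r B d (xi b (b j) k)) N =
     sum_f_R0 (fun k => c k * (cst / 2 * tri d (xi b (b j) k))) N + sum_f_R0 (fun k => c k * V k) N).
  { rewrite <- sum_plus. apply sum_eq. intros. unfold V. ring. }
  assert (Hfirst : sum_f_R0 (fun k => c k * (cst / 2 * tri d (xi b (b j) k))) N = (p ^ 2 + q ^ 2) * (cst * d)).
  { rewrite (sum_single _ j N HjN).
    - unfold c, ck, xi. rewrite Rminus_diag, tri_0 by lra. rewrite Hpq, Q_self. field.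
    - intros k Hk Hkj. unfold xi. rewrite tri_far; auto. ring. }
  assert (Hsecond : Rabs (sum_f_R0 (fun k => c k * V k) N) <= Cnorm (p, q) * P * E).
  { eapply Rle_trans. apply sum_abs_bound. exact HV. apply Rmult_le_compat_r; auto.
    eapply Rle_trans. apply sumck_bound. apply Rmult_le_compat_l; auto. apply Cnorm_ge0. }
  assert (HWb : Rabs (W r B d (b j)) <= E).
  { replace (W r B d (b j)) with (W r B d (b j) - cst / 2 * tri d (b j)).
    2: rewrite tri_far; [ring | lra | rewrite Rabs_right; lra].
    eapply Rle_trans. apply W_approx; lra. unfold E. apply Rplus_le_compat_r. apply Rmult_le_compat_r. lra. auto. }
  assert (HD : Rabs (Q p q (b j) (FN a b N t0) t0) <= Cnorm (p, q) * P).
  { eapply Rle_trans. apply DN_bound. apply Rmult_le_compat_l; auto. apply Cnorm_ge0. }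
  assert (HDW : Rabs (Q p q (b j) (FN a b N t0) t0 * W r B d (b j)) <= Cnorm (p, q) * P * E).
  { rewrite Rabs_mult. apply Rmult_le_compat; auto using Rabs_pos. }
  fold c. rewrite Hsplit, Hfirst, n_sq.
  apply abs_le_inv in Hsecond. apply abs_le_inv in HDW. lra.
Qed.

Lemma Rpower_pos x e : 0 < Rpower x e.
Proof. unfold Rpower. apply exp_pos. Qed.

Lemma Rpower_inv_base x e : 0 < x -> Rpower (/ x) e = / Rpower x e.
Proof.
  intros. unfold Rpower. rewrite ln_Rinv by auto. rewrite <- exp_Ropp. f_equal. ring.
Qed.

Lemma Rpower_m2 s e : 0 < s -> Rpower s (e - 2) = Rpower s e * / s ^ 2.
Proof.
  intros. unfold Rminus. rewrite Rpower_plus, Rpower_Ropp.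
  replace 2 with (INR 2) at 1 by (simpl; ring). rewrite Rpower_pow; auto.
Qed.

Lemma Rpower_m1 d e : 0 < d -> Rpower d (e - 1) = Rpower d e * / d.
Proof.
  intros. unfold Rminus. rewrite Rpower_plus, Rpower_Ropp, Rpower_1; auto.
Qed.

Lemma Tf_bounds d s : 0 < s -> 0 <= Tf d s /\ Tf d s <= d ^ 2 / 2 /\ Tf d s <= 2 / s ^ 2.
Proof.
  intros Hs. destruct (one_minus_cos (d * s)) as [[H1 H2] H3]. unfold Tf.
  assert (0 < s ^ 2) by nra.
  repeat split.
  - apply Rdiv_le_0_compat; lra.
  - apply Rmult_le_reg_r with (s ^ 2); auto. unfold Rdiv. rewrite Rmult_assoc, Rinv_l by lra.
    replace ((d * s) ^ 2) with (d ^ 2 * s ^ 2) in H2 by ring. lra.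
  - unfold Rdiv. apply Rmult_le_compat_r. left; apply Rinv_0_lt_compat; auto. lra.
Qed.

Lemma RInt_ChaslesR (f : R -> R) a b c : ex_RInt f a b -> ex_RInt f b c ->
  RInt f a b + RInt f b c = RInt f a c.
Proof. intros. exact (@RInt_Chasles R_CompleteNormedModule f a b c H H0). Qed.

Lemma g_le (h : R -> R) d s U T : 0 < s -> Rabs (h s) <= U -> (0 <= U -> Tf d s <= T) -> h s * Tf d s <= U * T.
Proof.
  intros Hs Hh HT. destruct (Tf_bounds d s Hs) as [H0 _].
  assert (0 <= U) by (pose proof (Rabs_pos (h s)); lra). specialize (HT H).
  apply Rle_trans with (Rabs (h s) * Tf d s).
  apply Rmult_le_compat_r; auto. apply Rle_abs.
  apply Rmult_le_compat; auto. apply Rabs_pos.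
Qed.

Lemma F7 (h : R -> R) n L alpha tau S' eta' d r B :
  0 <= n -> 0 < L -> 0 < alpha < 1 -> 0 <= tau -> 0 <= S' ->
  1 <= d -> / d <= eta' -> 0 < r < / d -> eta' < B ->
  (forall x y, 0 < x -> 0 < y -> ex_RInt (fun s => h s * Tf d s) x y) ->
  (forall s, 0 < s <= eta' -> Rabs (h s) <= n * L * Rpower s alpha + 4 * n * tau) ->
  (forall s, Rabs (h s) <= 2 * n * S') ->
  RInt (fun s => h s * Tf d s) r B <=
    (n * L / Rpower d alpha + 4 * n * tau) * d / 2 + 2 * n * L * (d / Rpower d alpha) / (1 - alpha)
    + 8 * n * tau * d + 4 * n * S' / eta'.
Proof.
  intros Hn HL Ha Htau HS Hd Hu1 Hr HB Hex Hnear Hfar.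
  set (A := Rpower d alpha). assert (HA : 0 < A) by apply Rpower_pos.
  set (u1 := / d). assert (Hu1p : 0 < u1) by (unfold u1; apply Rinv_0_lt_compat; lra).
  assert (Hu1d : u1 * d = 1) by (unfold u1; field; nz).
  assert (Hru1 : r < u1) by (unfold u1; lra).
  assert (Hu1e : u1 <= eta') by (unfold u1; lra).
  set (g := fun s => h s * Tf d s).
  rewrite <- (RInt_ChaslesR g r u1 B) by (apply Hex; lra).
  rewrite <- (RInt_ChaslesR g u1 eta' B) by (apply Hex; lra).
  assert (P1 : RInt g r u1 <= (n * L / A + 4 * n * tau) * d / 2).
  { set (C1 := (n * L / A + 4 * n * tau) * (d ^ 2 / 2)).
    apply Rle_trans with (RInt (fun _ => C1) r u1).
    - apply RInt_le. lra. apply Hex; lra. apply ex_RInt_const.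
      intros s Hs. unfold g, C1. apply g_le. lra.
      + eapply Rle_trans. apply Hnear; lra.
        assert (Rpower s alpha <= / A).
        { unfold A. rewrite <- Rpower_inv_base by lra. apply Rle_Rpower_l; [lra|]. unfold u1 in Hs. split; lra. }
        assert (0 <= n * L) by nra.
        unfold Rdiv. apply Rplus_le_compat_r. apply Rmult_le_compat_l; auto.
      + intros. apply Tf_bounds; lra.
    - rewrite RInt_constR. unfold C1.
      assert (0 <= n * L / A + 4 * n * tau).
      { assert (0 <= n * L / A) by (apply Rdiv_le_0_compat; nra). nra. }
      assert (E : (n * L / A + 4 * n * tau) * d / 2 = u1 * ((n * L / A + 4 * n * tau) * (d ^ 2 / 2))).
      { unfold u1. field; nz. }
      rewrite E. apply Rmult_le_compat_r. apply Rmult_le_pos; auto. nra. lra. }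
  assert (P2 : RInt g u1 eta' <= 2 * n * L * (d / A) / (1 - alpha) + 8 * n * tau * d).
  { set (G2 := fun s => (2 * n * L) * Rpower s (alpha - 2) + (4 * n * tau) * (2 / s ^ 2)).
    destruct (pow_int (alpha - 2) u1 eta' Hu1p ltac:(lra) ltac:(lra)) as [Hpe Hpv].
    destruct (invsq_K_int (4 * n * tau) u1 eta' Hu1p ltac:(lra)) as [Hie Hiv].
    apply Rle_trans with (RInt G2 u1 eta').
    - apply RInt_le. auto. apply Hex; lra. unfold G2. apply ex_plusR; auto. apply ex_scalR; auto.
      intros s Hs. unfold g, G2. 
      assert (Hs0 : 0 < s) by lra.
      apply Rle_trans with ((n * L * Rpower s alpha + 4 * n * tau) * (2 / s ^ 2)).
      + apply g_le. lra. apply Hnear; lra. intros; apply Tf_bounds; lra.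
      + rewrite Rpower_m2 by lra. right. field; nz.
    - unfold G2. rewrite RInt_plusR; auto. rewrite RInt_scalR by auto. rewrite Hpv, Hiv.
      replace (alpha - 2 + 1) with (alpha - 1) by ring.
      assert (Hp1 : Rpower u1 (alpha - 1) = d / A).
      { unfold u1. rewrite Rpower_inv_base by lra. rewrite Rpower_m1 by lra. fold A. field; nz. }
      rewrite Hp1. pose proof (Rpower_pos eta' (alpha - 1)).
      assert (E2 : 2 / u1 = 2 * d) by (unfold u1; field; nz).
      rewrite E2.
      assert (0 < 2 / eta') by (apply Rdiv_lt_0_compat; lra).
      assert (0 <= 2 * n * L) by nra.
      assert (E3 : 2 * n * L * ((Rpower eta' (alpha - 1) - d / A) / (alpha - 1)) =
                   2 * n * L * (d / A) / (1 - alpha) - 2 * n * L * Rpower eta' (alpha - 1) / (1 - alpha)).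
      { field; nz. }
      rewrite E3.
      assert (0 <= 2 * n * L * Rpower eta' (alpha - 1) / (1 - alpha)).
      { apply Rdiv_le_0_compat. nra. lra. }
      assert (0 <= 4 * n * tau * (2 / eta')) by (apply Rmult_le_pos; nra).
      assert (E4 : 4 * n * tau * (2 * d - 2 / eta') = 8 * n * tau * d - 4 * n * tau * (2 / eta')) by ring. lra. apply ex_scalR; auto. }
  assert (P3 : RInt g eta' B <= 4 * n * S' / eta').
  { destruct (invsq_K_int (2 * n * S') eta' B ltac:(lra) ltac:(lra)) as [Hie Hiv].
    apply Rle_trans with (RInt (fun s => (2 * n * S') * (2 / s ^ 2)) eta' B).
    - apply RInt_le. lra. apply Hex; lra. auto.
      intros s Hs. unfold g. apply g_le. lra. apply Hfar. intros; apply Tf_bounds; lra.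
    - rewrite Hiv. assert (0 < 2 / B) by (apply Rdiv_lt_0_compat; lra).
      assert (0 <= 2 * n * S') by nra.
      assert (E : 4 * n * S' / eta' = 2 * n * S' * (2 / eta')) by (field; nz).
      rewrite E. nra. }
  lra.
Qed.

Lemma alg n c d A L S E tau alpha eta' :
  0 < n -> 0 < c -> 0 < d -> 0 < A <= d -> 0 <= S -> 0 <= E -> 0 <= tau -> 0 < alpha < 1 -> 0 < eta' ->
  n ^ 2 * c * d - 2 * (n * S) * E <=
    (n * L / A + 4 * n * tau) * d / 2 + 2 * n * L * (d / A) / (1 - alpha) + 8 * n * tau * d + 4 * n * S / eta' ->
  n * c * A <= L * (1 / 2 + 2 / (1 - alpha)) + 4 * S / eta' + 2 * S * E + 10 * tau * A.
Proof.
  intros Hn Hc Hd HA HS HE Ht Ha He H.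
  set (br := 2 * S * E + (L / A + 4 * tau) * d / 2 + 2 * L * (d / A) / (1 - alpha) + 8 * tau * d + 4 * S / eta').
  assert (H1 : n * (n * c * d) <= n * br).
  { unfold br. replace (n * (n * c * d)) with (n ^ 2 * c * d) by ring.
    replace (n * (2 * S * E + (L / A + 4 * tau) * d / 2 + 2 * L * (d / A) / (1 - alpha) + 8 * tau * d + 4 * S / eta'))
      with (2 * (n * S) * E + ((n * L / A + 4 * n * tau) * d / 2 + 2 * n * L * (d / A) / (1 - alpha) + 8 * n * tau * d + 4 * n * S / eta'))
      by (field; nz). lra. }
  apply Rmult_le_reg_l in H1; auto.
  set (rho := A / d). assert (Hrho : 0 < rho <= 1).
  { unfold rho. split. apply Rdiv_lt_0_compat; lra. apply Rmult_le_reg_r with d; auto.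
    unfold Rdiv. rewrite Rmult_assoc, Rinv_l; lra. }
  assert (Hdr : d * rho = A) by (unfold rho; field; nz).
  apply Rmult_le_compat_r with (r := rho) in H1; [|lra].
  replace (n * c * d * rho) with (n * c * A) in H1 by (rewrite <- Hdr; ring).
  assert (E1 : br * rho = 2 * S * E * rho + L * (1 / 2 + 2 / (1 - alpha)) + 10 * tau * A + 4 * S / eta' * rho).
  { unfold br. rewrite <- Hdr. field; nz. }
  rewrite E1 in H1.
  assert (2 * S * E * rho <= 2 * S * E).
  { assert (0 <= 2 * S * E) by nra. nra. }
  assert (4 * S / eta' * rho <= 4 * S / eta').
  { assert (0 <= 4 * S / eta') by (apply Rdiv_le_0_compat; lra). nra. }
  lra.
Qed.

Lemma eps_le x y k : 0 <= k -> (forall eps, 0 < eps -> x <= y + eps * k) -> x <= y.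
Proof.
  intros Hk H. destruct (Rle_lt_dec x y) as [|Hlt]; auto.
  specialize (H ((x - y) / (2 * (k + 1))) ltac:(apply Rdiv_lt_0_compat; lra)).
  assert ((x - y) / (2 * (k + 1)) * k <= (x - y) / 2).
  { apply Rmult_le_reg_r with (2 * (k + 1)). lra.
    replace ((x - y) / (2 * (k + 1)) * k * (2 * (k + 1))) with ((x - y) * k) by (field; lra).
    replace ((x - y) / 2 * (2 * (k + 1))) with ((x - y) * (k + 1)) by field. nra. }
  lra.
Qed.

Theorem mainTheorem7
  (a : nat -> Cx) (b : nat -> R) (f : R -> Cx) (alpha t0 : R)
  (Ha : exists S, Un_cv (sum_f_R0 (fun j => Cnorm (a j))) S)
  (Hbpos : forall j, 0 < b j)
  (Hbinc : forall j, b j < b (S j))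
  (Hbinf : cv_infty b)
  (Hf : forall t, Ccv (Csum (fun j => Cmul (a j) (Cexpi (b j * t)))) (f t))
  (Halpha : 0 < alpha < 1)
  (Hhol : holder_at f alpha t0) :
  exists M, forall j, Cnorm (a j) * rpow (Delta_b b j) alpha <= M.
Proof.
  destruct Ha as [S0 HS]. destruct Hhol as [L [eta [HL [Heta Hh]]]].
  set (PS := fun N => sum_f_R0 (fun k => Cnorm (a k)) N).
  assert (HPSg : Un_growing PS).
  { intro m. unfold PS. simpl. pose proof (Cnorm_ge0 (a (S m))). lra. }
  assert (HPSle : forall N, PS N <= S0) by (intro; apply growing_ineq; auto).
  assert (HPS0 : forall N, 0 <= PS N) by (intro; apply cond_pos_sum; intro; apply Cnorm_ge0).
  assert (HaS : forall j, Cnorm (a j) <= S0).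
  { intro j. eapply Rle_trans; [|apply (HPSle j)]. unfold PS. destruct j; simpl. lra.
    pose proof (HPS0 j). unfold PS in H. lra. }
  assert (HS0 : 0 <= S0) by (pose proof (HPS0 0%nat); pose proof (HPSle 0%nat); lra).
  set (eta' := eta / 2). assert (Heta' : 0 < eta') by (unfold eta'; lra).
  set (d0 := Rmax 1 (2 / eta)).
  assert (Hd01 : 1 <= d0) by apply Rmax_l.
  assert (Hd02 : 2 / eta <= d0) by apply Rmax_r.
  set (Kc := L * (1 / 2 + 2 / (1 - alpha)) + 4 * S0 / eta').
  assert (HKc : 0 <= Kc).
  { unfold Kc. assert (0 < 2 / (1 - alpha)) by (apply Rdiv_lt_0_compat; lra).
    assert (0 <= 4 * S0 / eta') by (apply Rdiv_le_0_compat; lra). nra. }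
  assert (HKc' : 0 <= Kc / cst) by (apply Rdiv_le_0_compat; auto; apply cst_pos).
  exists (S0 * d0 + Kc / cst). intro j.
  set (d := Delta_b b j).
  destruct (Delta_pos b Hbpos Hbinc j) as [Hd Hdb]. fold d in Hd, Hdb.
  assert (Hrp : rpow d alpha = Rpower d alpha).
  { unfold rpow. destruct (Req_EM_T d 0); [lra|auto]. }
  rewrite Hrp. set (A := Rpower d alpha). assert (HA : 0 < A) by apply Rpower_pos.
  pose proof (Cnorm_ge0 (a j)) as Hn0.
  destruct (Rlt_le_dec d d0) as [Hsmall|Hbig].
  -
    assert (A <= d0).
    { destruct (Rle_lt_dec d 1).
      - apply Rle_trans with (Rpower 1 alpha). apply Rle_Rpower_l; lra.
        unfold Rpower. rewrite ln_1, Rmult_0_r, exp_0. lra.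
      - apply Rle_trans with (Rpower d 1). apply Rle_Rpower; lra. rewrite Rpower_1; lra. }
    assert (Cnorm (a j) * A <= S0 * d0) by (apply Rmult_le_compat; auto; lra).
    lra.
  -
    assert (Hd1 : 1 <= d) by lra.
    assert (HAd : A <= d).
    { apply Rle_trans with (Rpower d 1). apply Rle_Rpower; lra. rewrite Rpower_1; lra. }
    assert (Hud : / d <= eta').
    { unfold eta'. apply Rmult_le_reg_r with d. lra. rewrite Rinv_l by lra.
      assert (2 / eta * eta = 2) by (field; lra).
      assert (2 / eta <= d) by lra. 
      apply Rmult_le_compat_r with (r := eta) in H0; lra. }
    destruct (Req_dec (Cnorm (a j)) 0) as [Hn|Hn].
    { rewrite Hn. rewrite Rmult_0_l. assert (0 <= S0 * d0) by nra. lra. }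
    assert (Hnp : 0 < Cnorm (a j)) by lra.
    cut (Cnorm (a j) * A <= Kc / cst).
    { intros. assert (0 <= S0 * d0) by nra. lra. }
    apply Rmult_le_reg_l with cst. apply cst_pos.
    replace (cst * (Kc / cst)) with Kc by (field; pose proof cst_pos; lra).
    apply (eps_le _ _ (2 * S0 + 10 * A)). lra.
    intros eps Heps.
    destruct (HS eps Heps) as [N0 HN0].
    set (N := max N0 j).
    assert (HjN : (j <= N)%nat) by (unfold N; lia).
    set (tau := S0 - PS N).
    assert (Htau : 0 <= tau <= eps).
    { unfold tau. specialize (HN0 N ltac:(unfold N; lia)). unfold R_dist in HN0.
      pose proof (HPSle N). unfold PS. rewrite Rabs_left1 in HN0. unfold PS in H. lra.
      unfold PS in H. lra. }
    destruct (surjective_pairing (a j)) as [Hpq].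
    set (p := fst (a j)). set (q := snd (a j)).
    assert (Hpq' : a j = (p, q)) by apply surjective_pairing.
    assert (Hnpq : Cnorm (p, q) = Cnorm (a j)) by (rewrite <- Hpq'; reflexivity).
    set (Lam := (b N + 2 * b j) ^ 2).
    assert (HLam : 0 <= Lam) by apply pow2_ge_0.
    set (r := Rmin (/ (2 * d)) (eps / (2 * (Lam + 1)))).
    set (B := eta' + 8 / eps + 1).
    assert (Hr0 : 0 < r).
    { unfold r. apply Rmin_glb_lt. apply Rinv_0_lt_compat; lra. apply Rdiv_lt_0_compat; lra. }
    assert (Hr1 : r < / d).
    { unfold r. eapply Rle_lt_trans. apply Rmin_l. apply Rinv_lt_contravar; nra. }
    assert (Hr2 : r <= eps / (2 * (Lam + 1))) by apply Rmin_r.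
    assert (H8 : 0 < 8 / eps) by (apply Rdiv_lt_0_compat; lra).
    assert (HB : eta' < B) by (unfold B; lra).
    assert (HrB : 0 < r <= B) by lra.
    set (E := Lam * r + 4 / B).
    assert (HE : 0 <= E <= eps).
    { unfold E. split.
      - assert (0 < 4 / B) by (apply Rdiv_lt_0_compat; lra). nra.
      - assert (Lam * r <= eps / 2).
        { apply Rle_trans with (Lam * (eps / (2 * (Lam + 1)))). apply Rmult_le_compat_l; auto.
          apply Rmult_le_reg_r with (2 * (Lam + 1)). lra.
          replace (Lam * (eps / (2 * (Lam + 1))) * (2 * (Lam + 1))) with (Lam * eps) by (field; lra).
          replace (eps / 2 * (2 * (Lam + 1))) with (eps * (Lam + 1)) by field. nra. }
        assert (4 / B <= eps / 2).
        { apply Rle_trans with (4 / (8 / eps)). unfold Rdiv. apply Rmult_le_compat_l. lra.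
          apply Rinv_le_contravar; auto. unfold B. lra. right. field. lra. }
        lra. }
    assert (Hfar : forall k, k <> j -> d <= Rabs (b k - b j)) by (intros; apply Delta_far; auto).
    assert (HLk : forall k, (k <= N)%nat -> (Rabs (b k - b j) + d) ^ 2 <= Lam).
    { intros k Hk. unfold Lam. apply pow_incr. split.
      pose proof (Rabs_pos (b k - b j)); lra.
      assert (b k <= b N) by (apply b_mono; auto).
      pose proof (Hbpos k). pose proof (Hbpos j).
      assert (Rabs (b k - b j) <= b k + b j) by (apply Rabs_le; lra). lra. }
    assert (HLj : (Rabs (b j) + d) ^ 2 <= Lam).
    { unfold Lam. apply pow_incr. pose proof (Hbpos j). pose proof (Hbpos N).
      rewrite Rabs_right by lra. lra. }
    pose proof (F6 a b t0 j N d r B Lam S0 p q Hpq' HjN Hd Hdb Hfar HLk HLj HrB (HPSle N)) as H6.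
    set (h := hfun (ck p q (b j) t0 a b) (xi b (b j)) (Q p q (b j) (FN a b N t0) t0) (b j) N).
    assert (Hex : forall x y, 0 < x -> 0 < y -> ex_RInt (fun s => h s * Tf d s) x y).
    { intros. apply h_int; auto. }
    assert (Hnear : forall s, 0 < s <= eta' -> Rabs (h s) <= Cnorm (p, q) * L * Rpower s alpha + 4 * Cnorm (p, q) * tau).
    { intros s Hs. unfold h. rewrite <- F1.
      pose proof (F3 p q (b j) t0 f L eta alpha s Hh ltac:(unfold eta' in Hs; lra)) as H3.
      pose proof (F4 p q (b j) t0 f (FN a b N) (2 * tau) s (F2 a b f S0 HPSle Hf N)) as H4.
      apply abs_le_inv in H3. apply abs_le_inv in H4. apply Rabs_le. split; nra. }
    assert (Hfar2 : forall s, Rabs (h s) <= 2 * Cnorm (p, q) * S0).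
    { intros s. unfold h. eapply Rle_trans. apply h_far. 
      pose proof (Cnorm_ge0 (p, q)). pose proof (HPSle N). unfold PS in H0.
      assert (Cnorm (p, q) * sum_f_R0 (fun k => Cnorm (a k)) N <= Cnorm (p, q) * S0) by (apply Rmult_le_compat_l; auto).
      lra. }
    pose proof (F7 h (Cnorm (p, q)) L alpha tau S0 eta' d r B (Cnorm_ge0 _) HL Halpha
       (proj1 Htau) HS0 Hd1 Hud (conj Hr0 Hr1) HB Hex Hnear Hfar2) as H7.
    destruct (h_int (ck p q (b j) t0 a b) (xi b (b j)) (Q p q (b j) (FN a b N t0) t0) (b j) d r B N Hr0 ltac:(lra)) as [_ Hval].
    fold h in Hval. rewrite Hval in H7.
    fold E in H6.
    assert (Hcomb := Rle_trans _ _ _ H6 H7).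
    rewrite Hnpq in Hcomb. fold A in Hcomb.
    pose proof (alg (Cnorm (a j)) cst d A L S0 E tau alpha eta' Hnp cst_pos Hd (conj HA HAd) HS0
      (proj1 HE) (proj1 Htau) Halpha Heta' Hcomb) as Hfin.
    fold Kc in Hfin.
    assert (2 * S0 * E <= eps * (2 * S0)) by nra.
    assert (10 * tau * A <= eps * (10 * A)) by nra.
    replace (cst * (Cnorm (a j) * A)) with (Cnorm (a j) * cst * A) by ring.
    lra.
Qed.
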